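(* Let $Q = I \times J \subset \mathbb{W}$ be a rectangle and let $F \colon Q \to \mathbb{W}$ be a horizontal $(M,\epsilon)$-quasi-isometric embedding. Let $w_{1} = (y_{1},t_{1}), w_{2} = (y_{2},t_{2}) \in Q$ satisfy $|y_{2}-y_{1}| > \max\{8M\epsilon, 4M^{2}\|t_{1}-t_{2}\|\}$. Then $|\pi_{1}(F(w_{2})) - \pi_{1}(F(w_{1}))| \geq \frac{|y_{2}-y_{1}|}{2M}$.
   Context: $\mathbb{W}$ is $\mathbb{R}^{2}$ with the metric $d_{\mathrm{par}}((y,t),(\xi,\tau)) = \max\{|y-\xi|,|t-\tau|^{1/2}\}$; $\pi_{1}(y,t) = y$; horizontal lines in $\mathbb{W}$ are the sets $\mathbb{R} \times \{t\}$; $\|t_{1}-t_{2}\| := \sqrt{|t_{1}-t_{2}|}$. A map $F \colon (X,d) \to (Y,d')$ is an $(M,\epsilon)$-quasi-isometric embedding if $M^{-1}d(x,y) - \epsilon \leq d'(F(x),F(y)) \leq Md(x,y) + \epsilon$ for all $x,y$. $F \colon I \times J \to \mathbb{W}$ is a horizontal $(M,\epsilon)$-quasi-isometric embedding if it is an $(M,\epsilon)$-quasi-isometric embedding w.r.t. $d_{\mathrm{par}}$ and for every $t \in J$ there is a horizontal line $\ell_{t} \subset \mathbb{W}$ with $F(I \times \{t\}) \subset \ell_{t}$. *)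

(* Defs.v *)
From Stdlib Require Export Reals.
Open Scope R_scope.

Definition W := (R * R)%type.

Definition d_par (w v : W) : R :=
  Rmax (Rabs (fst w - fst v)) (sqrt (Rabs (snd w - snd v))).

Definition pi1 (w : W) : R := fst w.

Definition tnorm (t1 t2 : R) : R := sqrt (Rabs (t1 - t2)).

Definition is_interval (S : R -> Prop) : Prop :=
  forall a b c, S a -> S c -> a <= b -> b <= c -> S b.

Definition rect (I J : R -> Prop) (w : W) : Prop := I (fst w) /\ J (snd w).

Definition qi_embedding_on (Q : W -> Prop) (F : W -> W) (M eps : R) : Prop :=
  forall x y, Q x -> Q y ->
    / M * d_par x y - eps <= d_par (F x) (F y) /\
    d_par (F x) (F y) <= M * d_par x y + eps.

(* Horizontal lines are R x {s}; F(I x {t}) lies in a horizontal line for each t in J *)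
Definition horizontal_qi_embedding (I J : R -> Prop) (F : W -> W) (M eps : R) : Prop :=
  qi_embedding_on (rect I J) F M eps /\
  forall t, J t -> exists s : R, forall y, I y -> snd (F (y, t)) = s.

(* Main.v *)
Require Import Defs.
From Stdlib Require Import Lra Psatz.

Theorem lemma3p18 (I J : R -> Prop) (F : W -> W) (M eps : R)
  (HI : is_interval I) (HJ : is_interval J)
  (HM : 1 <= M) (Heps : 0 <= eps)
  (HF : horizontal_qi_embedding I J F M eps)
  (y1 t1 y2 t2 : R)
  (Hw1 : rect I J (y1, t1)) (Hw2 : rect I J (y2, t2))
  (Hsep : Rabs (y2 - y1) > Rmax (8 * M * eps) (4 * M ^ 2 * tnorm t1 t2)) :
  Rabs (pi1 (F (y2, t2)) - pi1 (F (y1, t1))) >= Rabs (y2 - y1) / (2 * M).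
Proof.
  destruct HF as [HQ Hh].
  destruct Hw1 as [I1 J1]; destruct Hw2 as [I2 J2]; simpl in *.
  assert (Hw3 : rect I J (y1, t2)) by (split; assumption).
  destruct (HQ (y1,t1) (y2,t2) (conj I1 J1) (conj I2 J2)) as [Hlow _].
  destruct (HQ (y1,t1) (y1,t2) (conj I1 J1) Hw3) as [_ Hup].
  destruct (Hh t2 J2) as [s Hs].
  pose proof (Hs y1 I1) as Hs1. pose proof (Hs y2 I2) as Hs2.
  set (d := Rabs (y2 - y1)) in *.
  set (tau := tnorm t1 t2) in *.
  assert (Htau0 : 0 <= tau) by (unfold tau, tnorm; apply sqrt_pos).
  assert (Hd12 : d_par (y1,t1) (y2,t2) >= d).
  { unfold d_par, d; simpl. rewrite Rabs_minus_sym. apply Rle_ge, Rmax_l. }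
  assert (Hd13 : d_par (y1,t1) (y1,t2) = tau).
  { unfold d_par, tau, tnorm; simpl. replace (y1 - y1) with 0 by ring.
    rewrite Rabs_R0. apply Rmax_right. apply sqrt_pos. }
  rewrite Hd13 in Hup.
  assert (Hs' : sqrt (Rabs (snd (F (y1, t1)) - snd (F (y2, t2)))) <= M * tau + eps).
  { eapply Rle_trans; [|exact Hup]. unfold d_par. rewrite Hs1, Hs2. apply Rmax_r. }
  pose proof (Rmax_l (8 * M * eps) (4 * M ^ 2 * tau)) as Ha.
  pose proof (Rmax_r (8 * M * eps) (4 * M ^ 2 * tau)) as Hb.
  assert (HM0 : 0 < M) by lra.
  set (m := / M).
  assert (Hm : M * m = 1) by (unfold m; field; try (apply Rgt_not_eq; lra)).
  assert (Hm0 : 0 < m) by (unfold m; apply Rinv_0_lt_compat; lra).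
  assert (E1 : M * tau = (4 * M ^ 2 * tau) * m / 4) by (unfold m; field; try (apply Rgt_not_eq; lra)).
  assert (E2 : eps = (8 * M * eps) * m / 8) by (unfold m; field; try (apply Rgt_not_eq; lra)).
  assert (E3 : d / (2 * M) = d * m / 2) by (unfold m; field; try (apply Rgt_not_eq; lra)).
  assert (G1 : 4 * M ^ 2 * tau < d) by (eapply Rle_lt_trans; [exact Hb| exact Hsep]).
  assert (G2 : 8 * M * eps < d) by (eapply Rle_lt_trans; [exact Ha| exact Hsep]).
  assert (F1 : M * tau < d * m / 4).
  { rewrite E1. apply Rmult_lt_compat_r; [lra|]. apply Rmult_lt_compat_r; lra. }
  assert (F2 : eps < d * m / 8).
  { rewrite E2. apply Rmult_lt_compat_r; [lra|]. apply Rmult_lt_compat_r; lra. }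
  assert (F3 : m * d_par (y1,t1) (y2,t2) >= m * d) by (apply Rle_ge, Rmult_le_compat_l; lra).
  rewrite E3. apply Rnot_lt_ge. intro Hc.
  unfold pi1 in Hc.
  assert (Hmax : d_par (F (y1, t1)) (F (y2, t2)) < 7 * (d * m) / 8).
  { unfold d_par. apply Rmax_lub_lt.
    - rewrite Rabs_minus_sym. assert (0 <= d * m) by (apply Rmult_le_pos; [unfold d; apply Rabs_pos|lra]). lra.
    - lra. }
  fold m in Hlow. lra.
Qed.
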